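(* Let $k$ be a number field, $v$ an archimedean place of $k$, $\lambda$ a partition with $t\le n$ parts, and $g\in\mathrm{GL}_n(k)$, viewed in $\mathrm{GL}_n(k_v)$ via $v$. Then $$H_v\big(\pi_\lambda(g)e_{U(\lambda)}\big)=\Big(\Delta_{\lambda^*_1}(g^*g)\,\Delta_{\lambda^*_2}(g^*g)\cdots\Delta_{\lambda^*_s}(g^*g)\Big)^{d_v/2}\,H_v\big(e_{U(\lambda)}\big),$$ where $g^*$ is the transpose of $g$ if $k_v=\mathbb{R}$ and its conjugate transpose if $k_v=\mathbb{C}$, and $\Delta_\ell$ denotes the leading principal $\ell\times\ell$ minor.
   Context: $k_v$ is the completion of $k$ at $v$ ($\mathbb{R}$ or $\mathbb{C}$) and $d_v=[k_v:\mathbb{R}]$. A partition $\lambda=(\lambda_1\ge\dots\ge\lambda_t>0)$ has $s=\lambda_1$ columns of heights $\lambda^*_\ell=\#\{i:\lambda_i\ge\ell\}$. Let $Z=(z_{a,i})_{1\le a\le t,1\le i\le n}$ be indeterminates. For $y_1,\dots,y_p\in k_v^n$ let $\Delta(y_1,\dots,y_p)=\det((Zy_b)_a)_{1\le a,b\le p}$, $(Zy)_a=\sum_i z_{a,i}(y)_i$; for a family $Y=(y_{\ell,b})_{1\le\ell\le s,1\le b\le\lambda^*_\ell}$ put $\phi_Y=\prod_\ell\Delta(y_{\ell,1},\dots,y_{\ell,\lambda^*_\ell})$. The Schur module $\mathbb{S}^\lambda(k_v^n)$ is the span of the $\phi_Y$ in $k_v[Z]$, with action $(\pi_\lambda(g)P)(Z)=P(Zg)$.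 The highest weight vector is $e_{U(\lambda)}=\prod_{\ell=1}^s\det(z_{a,b})_{1\le a,b\le\lambda^*_\ell}$. On $k_v[Z]$ consider the inner product (Hermitian if $k_v=\mathbb{C}$) making distinct monomials orthogonal with $\langle\prod z_{a,i}^{\alpha_{a,i}},\prod z_{a,i}^{\alpha_{a,i}}\rangle=\prod\alpha_{a,i}!$, and set $H_v(X)=\frac{\dim\mathbb{S}^\lambda(k^n)}{n!}\langle X,X\rangle^{d_v/2}$ for $X\in\mathbb{S}^\lambda(k_v^n)$. *)

(* Defs.v *)
From HB Require Import structures.
From mathcomp Require Import all_boot all_order all_algebra all_field.
From mathcomp Require Import mpoly.
From Stdlib Require Import ClassicalEpsilon ClassicalDescription.

Set Implicit Arguments.
Unset Strict Implicit.
Unset Printing Implicit Defensive.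

Import Order.TTheory GRing.Theory Num.Theory.
Local Open Scope ring_scope.

Definition is_partition (lam : seq nat) : Prop :=
  sorted geq lam /\ all (fun x => 0 < x)%N lam.

Definition nparts (lam : seq nat) : nat := size lam.
Definition ncols (lam : seq nat) : nat := head 0%N lam.
Definition colh (lam : seq nat) (l : nat) : nat := count (fun x => l <= x)%N lam.

(* Polynomials in the t*n indeterminates Z = (z_{a,i}), a < t, i < n;  *)
(* z_{a,i} is the variable number a*n+i (0-based indices).             *)
Section Poly.
Variables (R : comNzRingType) (t n : nat).

Definition zvar (a i : nat) : {mpoly R[t * n]} :=
  if (i < n)%N then
    match (insub (a * n + i)%N : option 'I_(t * n)) with
    | Some k => 'X_k
    | None => 0
    end
  else 0.

(* entry (i,j) (0-based) of a matrix, 0 outside the range *)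
Definition mxnat (m p : nat) (A : 'M[R]_(m, p)) (i j : nat) : R :=
  match (insub i : option 'I_m), (insub j : option 'I_p) with
  | Some i', Some j' => A i' j'
  | _, _ => 0
  end.

Definition Zy (y : 'rV[R]_n) (a : nat) : {mpoly R[t * n]} :=
  \sum_(i < n) zvar a i * (y 0 i)%:MP.

Definition DeltaZ (p : nat) (y : nat -> 'rV[R]_n) : {mpoly R[t * n]} :=
  \det (\matrix_(a < p, b < p) Zy (y b) a).

Definition phiY (lam : seq nat) (Y : nat -> nat -> 'rV[R]_n) : {mpoly R[t * n]} :=
  \prod_(1 <= l < (ncols lam).+1) DeltaZ (colh lam l) (Y l).

Definition eU (lam : seq nat) : {mpoly R[t * n]} :=
  \prod_(1 <= l < (ncols lam).+1)
     \det (\matrix_(a < colh lam l, b < colh lam l) zvar a b).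

(* the representation pi_lambda(g) P (Z) = P(Z g) *)
Definition piact (g : 'M[R]_n) (P : {mpoly R[t * n]}) : {mpoly R[t * n]} :=
  comp_mpoly [tuple (\sum_(j < n) zvar (k %/ n) j * (mxnat g j (k %% n))%:MP)
             | k < t * n] P.
End Poly.

(* dim S^lambda(F^n): the size of a basis (over F) of the F-span of the *)
(* phi_Y, Y ranging over families of vectors of F^n.                    *)
Definition schur_basis_size (F : fieldType) (n : nat) (lam : seq nat) (d : nat) : Prop :=
  exists Ys : 'I_d -> nat -> nat -> 'rV[F]_n,
    (forall c : 'I_d -> F,
        \sum_(i < d) c i *: phiY (size lam) lam (Ys i) = 0 -> forall i, c i = 0)
    /\ (forall Y : nat -> nat -> 'rV[F]_n, exists c : 'I_d -> F,
          phiY (size lam) lam Y = \sum_(i < d) c i *: phiY (size lam) lam (Ys i)).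

Definition schur_dim (F : fieldType) (n : nat) (lam : seq nat) : nat :=
  epsilon (inhabits 0%N) (schur_basis_size F n lam).

Definition ipZ (N : nat) (P Q : {mpoly algC[N]}) : algC :=
  \sum_(m <- msupp P) P@_m * (Q@_m)^* * (\prod_(j < N) (m j)`!)%:R.

(* archimedean place given by an embedding sigma : k -> C (here algC);  *)
Definition is_real_place (k : fieldType) (sigma : {rmorphism k -> algC}) : Prop :=
  forall x : k, sigma x \is Num.real.

Definition dv (k : fieldType) (sigma : {rmorphism k -> algC}) : nat :=
  if excluded_middle_informative (is_real_place sigma) then 1%N else 2%N.

Definition powhalf (d : nat) (x : algC) : algC := sqrtC x ^+ d.

Definition Hv (k : fieldType) (sigma : {rmorphism k -> algC}) (n : nat)
    (lam : seq nat) (X : {mpoly algC[size lam * n]}) : algC :=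
  ((schur_dim k n lam)%:R / (n`!)%:R) * powhalf (dv sigma) (ipZ X X).

Definition gstar (k : fieldType) (sigma : {rmorphism k -> algC}) (n : nat)
    (g : 'M[algC]_n) : 'M[algC]_n :=
  if excluded_middle_informative (is_real_place sigma) then g^T
  else (map_mx (fun z : algC => z^*) g)^T.

Definition lpminor (n : nat) (A : 'M[algC]_n) (l : nat) : algC :=
  \det (\matrix_(i < l, j < l) mxnat A i j).

(* Main.v *)
Require Import Defs.
From HB Require Import structures.
From mathcomp Require Import all_boot all_order all_algebra all_field.
From mathcomp Require Import mpoly.
From mathcomp Require Import ring.
From Stdlib Require Import ClassicalEpsilon ClassicalDescription.
Import Order.TTheory GRing.Theory Num.Theory.
Local Open Scope ring_scope.

Set Implicit Arguments.
Unset Strict Implicit.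
Unset Printing Implicit Defensive.


Section IP.
Variable N : nat.
Implicit Types P Q : {mpoly algC[N]}.

Definition wt (m : 'X_{1..N}) : algC := (\prod_(j < N) (m j)`!)%:R.

Lemma ipZ_seq (s : seq 'X_{1..N}) P Q : uniq s -> {subset msupp P <= s} ->
  ipZ P Q = \sum_(m <- s) P@_m * (Q@_m)^* * wt m.
Proof.
move=> us sub; rewrite /ipZ [RHS](bigID (fun m => m \in msupp P)) /=.
rewrite [X in _ + X]big1 ?addr0; last first.
  by move=> m /memN_msupp_eq0 ->; rewrite !mul0r.
rewrite -[RHS]big_filter -[LHS]big_filter; apply: perm_big.
apply: uniq_perm; rewrite ?filter_uniq ?msupp_uniq //.
by move=> m; rewrite !mem_filter; case mP: (m \in msupp P); rewrite //= (sub _ mP).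
Qed.

Lemma ipZ_seq2 (s : seq 'X_{1..N}) P Q : uniq s -> {subset msupp Q <= s} ->
  ipZ P Q = \sum_(m <- s) P@_m * (Q@_m)^* * wt m.
Proof.
move=> us sub.
rewrite (@ipZ_seq (undup (s ++ msupp P))) ?undup_uniq //; last first.
  by move=> m mP; rewrite mem_undup mem_cat mP orbT.
rewrite (bigID (fun m => m \in s)) /=.
rewrite [X in _ + X]big1 ?addr0; last first.
  move=> m ms; have /memN_msupp_eq0 -> : m \notin msupp Q.
    by apply/negP => mQ; move: (sub _ mQ); rewrite (negbTE ms).
  by rewrite conjC0 !mulr0 mul0r.
rewrite -big_filter; apply: perm_big.
apply: uniq_perm; rewrite ?filter_uniq ?undup_uniq //.
by move=> m; rewrite mem_filter mem_undup mem_cat; case: (m \in s).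
Qed.

Definition supp2 P Q := undup (msupp P ++ msupp Q).
Lemma supp2_uniq P Q : uniq (supp2 P Q). Proof. exact: undup_uniq. Qed.
Lemma supp2_l P Q : {subset msupp P <= supp2 P Q}.
Proof. by move=> m h; rewrite mem_undup mem_cat h. Qed.
Lemma supp2_r P Q : {subset msupp Q <= supp2 P Q}.
Proof. by move=> m h; rewrite mem_undup mem_cat h orbT. Qed.

Lemma ipZDl P1 P2 Q : ipZ (P1 + P2) Q = ipZ P1 Q + ipZ P2 Q.
Proof.
set s := supp2 P1 P2.
have us : uniq s by exact: supp2_uniq.
have h1 : {subset msupp P1 <= s} by exact: supp2_l.
have h2 : {subset msupp P2 <= s} by exact: supp2_r.
have h3 : {subset msupp (P1 + P2) <= s}.
  by move=> m /msuppD_le; rewrite mem_cat => /orP[/h1|/h2].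
rewrite (ipZ_seq _ us h1) (ipZ_seq _ us h2) (ipZ_seq _ us h3).
by rewrite -big_split /=; apply: eq_bigr => m _; rewrite mcoeffD !mulrDl.
Qed.

Lemma ipZDr P Q1 Q2 : ipZ P (Q1 + Q2) = ipZ P Q1 + ipZ P Q2.
Proof.
rewrite /ipZ -big_split /=; apply: eq_bigr => m _.
by rewrite mcoeffD rmorphD /= mulrDr mulrDl.
Qed.

Lemma ipZZl c P Q : ipZ (c *: P) Q = c * ipZ P Q.
Proof.
rewrite (@ipZ_seq (msupp P)) ?msupp_uniq //; last exact: msuppZ_le.
rewrite /ipZ mulr_sumr; apply: eq_bigr => m _.
by rewrite mcoeffZ !mulrA.
Qed.

Lemma ipZZr c P Q : ipZ P (c *: Q) = c^* * ipZ P Q.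
Proof.
rewrite /ipZ mulr_sumr; apply: eq_bigr => m _.
by rewrite mcoeffZ rmorphM /= mulrCA !mulrA.
Qed.

Lemma ipZ0l Q : ipZ 0 Q = 0.
Proof. by rewrite /ipZ msupp0 big_nil. Qed.
Lemma ipZ0r P : ipZ P 0 = 0.
Proof. by rewrite /ipZ big1 // => m _; rewrite mcoeff0 conjC0 mulr0 mul0r. Qed.

Lemma ipZ_suml (I : Type) (r : seq I) (F : I -> {mpoly algC[N]}) Q :
  ipZ (\sum_(i <- r) F i) Q = \sum_(i <- r) ipZ (F i) Q.
Proof.
elim: r => [|x r IH]; first by rewrite !big_nil ipZ0l.
by rewrite !big_cons ipZDl IH.
Qed.

Lemma ipZ_sumr (I : Type) (r : seq I) (F : I -> {mpoly algC[N]}) P :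
  ipZ P (\sum_(i <- r) F i) = \sum_(i <- r) ipZ P (F i).
Proof.
elim: r => [|x r IH]; first by rewrite !big_nil ipZ0r.
by rewrite !big_cons ipZDr IH.
Qed.

Lemma wt_ge0 m : 0 <= wt m. Proof. exact: ler0n. Qed.

Lemma ipZ_ge0 P : 0 <= ipZ P P.
Proof.
rewrite /ipZ; apply: sumr_ge0 => m _.
by rewrite -normCK mulr_ge0 ?exprn_ge0 ?normr_ge0 ?ler0n.
Qed.

Lemma ipZ_conj P Q : (ipZ P Q)^* = ipZ Q P.
Proof.
rewrite (@ipZ_seq (supp2 P Q)) ?supp2_uniq; last exact: supp2_l.
rewrite [in RHS](@ipZ_seq (supp2 P Q) Q) ?supp2_uniq; last exact: supp2_r.
rewrite rmorph_sum; apply: eq_bigr => m _.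
rewrite !rmorphM /= conjCK [(wt m)^*]conj_Creal ?rpred_nat //.
by rewrite (mulrC (P@_m)^*).
all: by [].
Qed.



Lemma wt0 : wt 0%MM = 1.
Proof. by rewrite /wt big1 // => j _; rewrite mnm0E. Qed.

Lemma wt_addU i m : wt (U_(i) + m)%MM = wt m * (m i).+1%:R.
Proof.
rewrite /wt -natrM; congr (_%:R).
rewrite (bigD1 i) //= [in RHS](bigD1 i) //= mnmDE mnm1E eqxx add1n factS.
rewrite [RHS]mulnC -mulnA; congr (_ * (_ * _))%N.
by apply: eq_bigr => j ji; rewrite mnmDE mnm1E eq_sym (negbTE ji).
Qed.

Lemma ipZ_Xl i P Q : ipZ ('X_i * P) Q = ipZ P (mderiv i Q).
Proof.
set s := [seq (U_(i) + m')%MM | m' <- msupp P].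
have us : uniq s.
  rewrite map_inj_uniq ?msupp_uniq //.
  by move=> m1 m2 /=; rewrite ![(U_(i) + _)%MM]addmC; apply: addIm.
have hs : {subset msupp ('X_i * P) <= s}.
  by move=> m; rewrite mulrC (perm_mem (msuppMX P U_(i))).
rewrite (ipZ_seq _ us hs) big_map /ipZ; apply: eq_bigr => m _.
rewrite [_ * P]mulrC mcoeffMX mcoeff_deriv wt_addU addmC -/(wt m).
rewrite rmorphMn /= -mulr_natr -!mulrA; congr (_ * _).
rewrite -mulr_natr; ring.
Qed.

Lemma ipZ_Cl c Q : ipZ c%:MP Q = c * (Q@_0%MM)^*.
Proof.
rewrite -[c%:MP]mulr1 mul_mpolyC ipZZl; congr (_ * _).
rewrite /ipZ msupp1 big_seq1 mcoeff1 eqxx -/(wt 0%MM) wt0.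
by rewrite mulr1 mul1r.
Qed.

Lemma mpoly_ind2 (Pr : {mpoly algC[N]} -> Prop) :
  (forall c, Pr c%:MP) -> (forall p q, Pr p -> Pr q -> Pr (p + q)) ->
  (forall i p, Pr p -> Pr ('X_i * p)) -> forall p, Pr p.
Proof.
move=> hC hD hX.
have hXn : forall i k q, Pr q -> Pr ('X_i ^+ k * q).
  move=> i; elim=> [|k IH] q Hq; first by rewrite expr0 mul1r.
  by rewrite exprSr -mulrA; apply: IH; apply: hX.
have hm : forall (r : seq 'I_N) (m : 'X_{1..N}) c,
    Pr ((\prod_(i <- r) 'X_i ^+ m i) * c%:MP).
  elim=> [|i r IH] m c; first by rewrite big_nil mul1r.
  by rewrite big_cons -mulrA; apply: hXn.
elim/mpolyind => [|c m p _ _ Hp]; first by have := hC 0; rewrite raddf0.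
apply: hD => //; rewrite -mul_mpolyC mulrC mpolyXE_id.
exact: hm.
Qed.

Lemma mderivXU i j : mderiv i ('X_j : {mpoly algC[N]}) = ((j == i)%:R)%:MP.
Proof.
rewrite mderivX mnm1E; case: eqP => [->|_]; last by rewrite scale0r.
have -> : (U_(i) - U_(i))%MM = 0%MM.
  by apply/mnmP => l; rewrite mnmBE subnn mnm0E.
by rewrite mpolyX0 scale1r.
Qed.

Lemma mcoeffX0 i (p : {mpoly algC[N]}) : ('X_i * p)@_(0%MM : 'X_{1..N}) = 0.
Proof.
rewrite [p]mpolyE mulr_sumr raddf_sum big1 // => m _.
rewrite /= -scalerAr -mpolyXD mcoeffZ mcoeffX.
by rewrite mnmD_eq0 mnm1_eq0 mulr0.
Qed.

Definition ct (M : nat) (h : 'M[algC]_M) : 'M[algC]_M := \matrix_(i, j) (h j i)^*.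

Definition lin (h : 'M[algC]_N) (k : 'I_N) : {mpoly algC[N]} :=
  \sum_(j < N) 'X_j * (h j k)%:MP.
Definition subst (h : 'M[algC]_N) (P : {mpoly algC[N]}) : {mpoly algC[N]} :=
  P \mPo [tuple lin h k | k < N].

Lemma substX h k : subst h 'X_k = lin h k.
Proof. by rewrite /subst comp_mpolyXU nth_mktuple. Qed.
Lemma substC h c : subst h c%:MP = c%:MP.
Proof. exact: comp_mpolyC. Qed.
Lemma substD h p q : subst h (p + q) = subst h p + subst h q.
Proof. exact: comp_mpolyD. Qed.
Lemma substM h p q : subst h (p * q) = subst h p * subst h q.
Proof. exact: rmorphM. Qed.
Lemma substZ h c p : subst h (c *: p) = c *: subst h p.
Proof. exact: comp_mpolyZ. Qed.
Lemma subst0 h : subst h 0 = 0.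
Proof. exact: comp_mpoly0. Qed.
Lemma subst_sum h (I : Type) (r : seq I) (F : I -> {mpoly algC[N]}) :
  subst h (\sum_(i <- r) F i) = \sum_(i <- r) subst h (F i).
Proof. exact: raddf_sum. Qed.

Lemma mderiv_lin h i k : mderiv i (lin h k) = (h i k)%:MP.
Proof.
rewrite /lin raddf_sum (bigD1 i) //= big1 ?addr0.
  by rewrite mderivM mderivC mulr0 addr0 mderivXU eqxx mul1r.
move=> j ji; rewrite mderivM mderivC mulr0 addr0 mderivXU (negbTE ji).
by rewrite mul0r.
Qed.

Lemma subst_deriv h i Q :
  mderiv i (subst h Q) = \sum_(j < N) (h i j)%:MP * subst h (mderiv j Q).
Proof.
elim/mpoly_ind2: Q => [c|p q Hp Hq|k p Hp].
- rewrite substC mderivC big1 // => j _.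
  by rewrite mderivC subst0 mulr0.
- rewrite substD mderivD Hp Hq -big_split /=; apply: eq_bigr => j _.
  by rewrite mderivD substD mulrDr.
- rewrite substM substX mderivM mderiv_lin Hp.
  transitivity (\sum_(j < N) ((h i j)%:MP * (((k == j)%:R)%:MP * subst h p)
      + lin h k * ((h i j)%:MP * subst h (mderiv j p)))).
    rewrite big_split /= -mulr_sumr; congr (_ + _).
    rewrite (bigD1 k) //= eqxx mul1r big1 ?addr0 // => j jk.
    by rewrite eq_sym (negbTE jk) mul0r mulr0.
  apply: eq_bigr => j _; rewrite mderivM mderivXU substD !substM substC substX.
  ring.
Qed.

Lemma subst_coef0 h Q : (subst h Q)@_0%MM = Q@_0%MM.
Proof.
elim/mpoly_ind2: Q => [c|p q Hp Hq|k p Hp].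
- by rewrite substC.
- by rewrite substD !mcoeffD Hp Hq.
- rewrite substM substX [in RHS]mcoeffX0 /lin mulr_suml raddf_sum big1 // => j _.
  by rewrite /= -mulrA mcoeffX0.
Qed.

Lemma subst_adj h P Q : ipZ (subst h P) Q = ipZ P (subst (ct h) Q).
Proof.
elim/mpoly_ind2: P Q => [c|p q Hp Hq|i p Hp] Q.
- by rewrite substC !ipZ_Cl subst_coef0.
- by rewrite substD !ipZDl Hp Hq.
- rewrite substM substX /lin mulr_suml ipZ_suml ipZ_Xl subst_deriv ipZ_sumr.
  apply: eq_bigr => j _.
  rewrite -mulrA mul_mpolyC ipZ_Xl mul_mpolyC ipZZl Hp ipZZr mxE conjCK.
  by [].
Qed.

Lemma subst_comp h1 h2 P : subst h1 (subst h2 P) = subst (h1 *m h2) P.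
Proof.
elim/mpoly_ind2: P => [c|p q Hp Hq|i p Hp].
- by rewrite !substC.
- by rewrite !substD Hp Hq.
- rewrite !substM Hp !substX; congr (_ * _).
  rewrite /lin subst_sum.
  under eq_bigr do rewrite substM substX substC /lin mulr_suml.
  rewrite exchange_big /=; apply: eq_bigr => l _.
  rewrite mxE rmorph_sum mulr_sumr; apply: eq_bigr => j _.
  by rewrite rmorphM mulrA.
Qed.

End IP.

Definition ctv m n (v : 'M[algC]_(m, n)) : 'M[algC]_(n, m) := (map_mx (fun z : algC => z^*) v)^T.

Definition PD n (A : 'M[algC]_n) :=
  forall v : 'rV[algC]_n, v != 0 -> 0 < (v *m A *m ctv v) 0 0.

Lemma ctv_mul m n p (A : 'M[algC]_(m, n)) (B : 'M[algC]_(n, p)) :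
  ctv (A *m B) = ctv B *m ctv A.
Proof. by rewrite /ctv map_mxM trmx_mul. Qed.

Lemma ctvK m n (A : 'M[algC]_(m, n)) : ctv (ctv A) = A.
Proof. by apply/matrixP => i j; rewrite !mxE conjCK. Qed.

Lemma ctv_row m n1 n2 (A : 'M[algC]_(m, n1)) (B : 'M[algC]_(m, n2)) :
  ctv (row_mx A B) = col_mx (ctv A) (ctv B).
Proof. by rewrite /ctv map_row_mx tr_row_mx. Qed.

Lemma form_pos n (w : 'rV[algC]_n) : w != 0 -> 0 < (w *m ctv w) 0 0.
Proof.
move=> wn0; rewrite !mxE.
have h : forall k : 'I_n, true -> 0 <= w 0 k * (ctv w) k 0.
  by move=> k _; rewrite !mxE -normCK exprn_ge0.
rewrite lt_def sumr_ge0 // andbT; apply/negP => /eqP /(psumr_eq0P h) H.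
case/negP: wn0; apply/eqP/matrixP => i k; rewrite ord1 mxE.
by have := H k isT; rewrite !mxE -normCK => /eqP; rewrite expf_eq0 /= normr_eq0 => /eqP.
Qed.

Lemma PD_gram n (g : 'M[algC]_n) : g \in unitmx -> PD (ctv g *m g).
Proof.
move=> gu v vn0.
have -> : v *m (ctv g *m g) *m ctv v = (v *m ctv g) *m ctv (v *m ctv g).
  by rewrite ctv_mul ctvK !mulmxA.
apply: form_pos; apply: contra vn0 => /eqP h.
have cu : ctv g \in unitmx by rewrite /ctv unitmx_tr map_unitmx.
by rewrite -(mulmxK cu v) h mul0mx.
Qed.

Lemma block_form n (y1 : 'M[algC]_1) (y2 : 'rV[algC]_n) (a : 'M[algC]_1)
  (r : 'M[algC]_(1, n)) (c : 'M[algC]_(n, 1)) (D : 'M[algC]_n)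
  (z1 : 'M[algC]_1) (z2 : 'cV[algC]_n) :
  row_mx y1 y2 *m block_mx a r c D *m col_mx z1 z2 =
  y1 *m a *m z1 + y2 *m c *m z1 + y1 *m r *m z2 + y2 *m D *m z2.
Proof. by rewrite mul_row_block mul_row_col !mulmxDl addrA. Qed.

Lemma mx11_mul (m : nat) (u : 'M[algC]_(1, m)) (w : 'M[algC]_(m, 1)) (x : algC) :
  (x%:M *m u *m w) 0 0 = x * (u *m w) 0 0.
Proof. by rewrite mul_scalar_mx -scalemxAl mxE. Qed.

Lemma LU n (A : 'M[algC]_n) : PD A ->
  exists L U : 'M[algC]_n, [/\ is_trig_mx L, is_trig_mx U^T & A = L *m U].
Proof.
elim: n A => [|n IH] A hA.
  exists 0, 0; split; try by apply/is_trig_mxP => -[].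
  by apply/matrixP => -[].
pose B : 'M[algC]_(1 + n) := A.
pose a := B 0 0.
pose r := ursubmx B; pose c := dlsubmx B; pose D := drsubmx B.
have hul : ulsubmx B = a%:M.
  rewrite [LHS]mx11_scalar !mxE; congr (_%:M); rewrite /a; congr (B _ _); exact: val_inj.
have hBA : block_mx a%:M r c D = B by rewrite -hul submxK.
have ha : 0 < a.
  have hv : (row_mx 1%:M 0 : 'rV[algC]_(1 + n)) != 0.
    by rewrite row_mx_eq0 oner_eq0.
  have E : (row_mx 1%:M 0 *m B *m ctv (row_mx 1%:M 0 : 'rV[algC]_(1 + n))) 0 0 = a.
    rewrite -hBA ctv_row block_form.
    rewrite !mul0mx !addr0 mul1mx /ctv map_mx1 trmx1 mulmx1 map_mx0 trmx0 mulmx0 addr0.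
    by rewrite mxE eqxx mulr1n.
  by rewrite -E; exact: (hA _ hv).
have an0 : a != 0 by rewrite gt_eqF.
pose S := D - c *m (a^-1 *: r).
have hS : PD S.
  move=> x xn0.
  pose al := - (a^-1 * (x *m c) 0 0).
  have hv : (row_mx al%:M x : 'rV[algC]_(1 + n)) != 0.
    by rewrite row_mx_eq0 negb_and xn0 orbT.
  have e1 : ctv (al%:M : 'M_1) = (al^*)%:M.
    by apply/matrixP => i j; rewrite !ord1 !mxE eqxx !mulr1n.
  have e2 : forall (u : 'M[algC]_(1,1)) (y : algC), (u *m y%:M) 0 0 = u 0 0 * y.
    by move=> u y; rewrite mul_mx_scalar mxE mulrC.
  have E : (row_mx al%:M x *m B *m ctv (row_mx al%:M x : 'rV[algC]_(1 + n))) 0 0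
      = (x *m S *m ctv x) 0 0.
    have addE : forall (U V : 'M[algC]_1), (U + V) 0 0 = U 0 0 + V 0 0.
      by move=> U V; rewrite mxE.
    rewrite -hBA ctv_row block_form e1 !addE.
    rewrite -!scalar_mxM mxE eqxx mulr1n e2 mx11_mul.
    have -> : (x *m S *m ctv x) 0 0 =
        (x *m D *m ctv x) 0 0 - a^-1 * ((x *m c) 0 0 * (r *m ctv x) 0 0).
      have subE : forall (U V : 'M[algC]_1), (U - V) 0 0 = U 0 0 - V 0 0.
        by move=> U V; rewrite !mxE.
      rewrite /S mulmxBr mulmxBl subE; congr (_ - _).
      rewrite -scalemxAr -scalemxAr -scalemxAl mxE !mulmxA [x *m c]mx11_scalar mx11_mul mulrA.
      by rewrite [in RHS]mxE eqxx mulr1n mulrA.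
    have ra : a^* = a by rewrite geC0_conj // ltW.
    rewrite /al rmorphN rmorphM /= fmorphV /= ra.
    field; exact: an0.
  by rewrite -E; exact: (hA _ hv).
have [L' [U' [hL' hU' hLU]]] := IH S hS.
exists (block_mx 1%:M 0 (a^-1 *: c) L' : 'M_(1 + n)).
exists (block_mx a%:M r 0 U' : 'M_(1 + n)).
split.
- have H : is_trig_mx (block_mx 1%:M 0 (a^-1 *: c) L' : 'M[algC]_(1 + n)).
    by rewrite (is_trig_block_mx _ _ _ _ (erefl _)) eqxx scalar_mx_is_trig hL'.
  exact: H.
- have H : is_trig_mx (block_mx a%:M r 0 U' : 'M[algC]_(1 + n))^T.
    rewrite tr_block_mx (is_trig_block_mx _ _ _ _ (erefl _)) trmx0 eqxx hU' andbT.
    exact: mx11_is_trig.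
  exact: H.
- suff H : B = (block_mx 1%:M 0 (a^-1 *: c) L' : 'M[algC]_(1 + n)) *m
      block_mx a%:M r 0 U' by exact: H.
  rewrite mulmx_block !mul0mx !mulmx0 !addr0 !mul1mx -hLU /S.
  rewrite -scalemxAl mul_mx_scalar scalerA mulVf // scale1r.
  rewrite -!scalemxAl -scalemxAr addrC subrK.
  by rewrite hBA.
Qed.

Lemma blocksum (V : zmodType) t n a (F : nat -> V) : (a < t)%N ->
  \sum_(j < t * n) (if ((j %/ n)%N == a)%N then F (j %% n)%N else 0) = \sum_(j < n) F j.
Proof.
move=> hat.
case: n F => [|n] F; first by rewrite muln0 !big_ord0.
rewrite -(big_mkord xpredT (fun j => if ((j %/ n.+1)%N == a)%N then F (j %% n.+1)%N else 0)).
rewrite -(big_mkord xpredT F).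
have tn : (t * n.+1 = a * n.+1 + n.+1 + (t - a.+1) * n.+1)%N.
  by rewrite -mulSnr -mulnDl subnKC.
rewrite tn (@big_cat_nat _ _ _ (a * n.+1 + n.+1)%N) ?leq_addr //=.
rewrite (@big_cat_nat _ _ _ (a * n.+1)%N) ?leq_addr //=.
rewrite big1_seq ?add0r; last first.
  move=> j /andP[_]; rewrite mem_iota add0n subn0 => /andP[_ hj].
  by rewrite ltn_eqF // ltn_divLR.
rewrite [X in _ + X]big1_seq ?addr0; last first.
  move=> j /andP[_]; rewrite mem_iota subnKC ?leq_addr // => /andP[hj _].
  rewrite eqn_leq; case: (boolP (j %/ n.+1 <= a)%N) => //= h.
  by move: h; rewrite -ltnS ltn_divLR // mulSnr ltnNge hj.
rewrite -{1}[(a * n.+1)%N]add0n big_addn addKn; apply: eq_big_nat => j /andP[_ hj].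
by rewrite divnDMl // divn_small // add0n eqxx addnC modnMDl modn_small.
Qed.

Section Blk.
Variables (t n : nat).

Definition Hb (g : 'M[algC]_n) : 'M[algC]_(t * n) :=
  \matrix_(j, k) (if (j %/ n == k %/ n)%N then mxnat g (j %% n)%N (k %% n)%N else 0).

Lemma mxnat_ord m p (A : 'M[algC]_(m, p)) (i : 'I_m) (j : 'I_p) :
  mxnat A i j = A i j.
Proof. by rewrite /mxnat !valK. Qed.

Lemma mxnat_lt m p (A : 'M[algC]_(m, p)) i j (hi : (i < m)%N) (hj : (j < p)%N) :
  mxnat A i j = A (Ordinal hi) (Ordinal hj).
Proof. by rewrite -mxnat_ord. Qed.

Lemma mxnat_out m p (A : 'M[algC]_(m, p)) i j : ~~ (i < m)%N || ~~ (j < p)%N ->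
  mxnat A i j = 0.
Proof.
rewrite /mxnat; case: insubP => [i' hi _|//]; case: insubP => [j' hj _|//].
by rewrite hi hj.
Qed.

Lemma mxnat_mul (A B : 'M[algC]_n) i j : (i < n)%N -> (j < n)%N ->
  mxnat (A *m B) i j = \sum_(k < n) mxnat A i k * mxnat B k j.
Proof.
move=> hi hj; rewrite (mxnat_lt _ hi hj) mxE; apply: eq_bigr => k _.
by rewrite (mxnat_lt _ hi (ltn_ord k)) (mxnat_lt _ (ltn_ord k) hj); congr (A _ _ * B _ _);
  apply: val_inj.
Qed.

Lemma mxnat_ct (A : 'M[algC]_n) i j : mxnat (ct A) i j = (mxnat A j i)^*.
Proof.
case: (boolP ((i < n)%N && (j < n)%N)) => [/andP[hi hj]|h].
  rewrite (mxnat_lt _ hi hj) (mxnat_lt _ hj hi) mxE; congr (A _ _)^*; exact: val_inj.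
rewrite !mxnat_out ?conjC0 //; move: h; rewrite negb_and; by case/orP=> ->; rewrite ?orbT.
Qed.

Lemma Hb_ct (g : 'M[algC]_n) : ct (Hb g) = Hb (ct g).
Proof.
apply/matrixP => i k; rewrite !mxE eq_sym mxnat_ct.
by case: ifP; rewrite ?conjC0.
Qed.

Lemma Hb_mul (g h : 'M[algC]_n) : Hb g *m Hb h = Hb (g *m h).
Proof.
apply/matrixP => i k; rewrite !mxE.
have n0 : (0 < n)%N by case: (n) i => [|//] []; rewrite muln0.
have hi : (i %/ n < t)%N by rewrite ltn_divLR.
case: eqP => [e|ne].
  rewrite mxnat_mul ?ltn_pmod // -(blocksum n (fun j => mxnat g (i %% n)%N j * mxnat h j (k %% n)%N) hi).
  apply: eq_bigr => j _.
  rewrite !mxE -e [(i %/ n)%N == _]eq_sym.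
  by case: eqP; rewrite ?mul0r.
rewrite big1 // => j _; rewrite !mxE.
case: eqP => [e1|_]; last by rewrite mul0r.
by case: eqP => [e2|_]; [case: ne; rewrite e1 e2 | rewrite mulr0].
Qed.

Lemma zvar_ord (j : 'I_(t * n)) : zvar algC t n (j %/ n)%N (j %% n)%N = 'X_j.
Proof.
have n0 : (0 < n)%N by case: (n) j => [|//] []; rewrite muln0.
by rewrite /zvar ltn_pmod // -divn_eq valK.
Qed.

Lemma zvar_lt a i (ha : (a < t)%N) (hi : (i < n)%N) :
  exists k : 'I_(t * n), zvar algC t n a i = 'X_k /\ (k %/ n = a)%N /\ (k %% n = i)%N.
Proof.
have hk : (a * n + i < t * n)%N.
  by apply: (@leq_trans (a * n + n)); rewrite ?ltn_add2l // -mulSnr leq_mul2r ha orbT.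
have n0 : (0 < n)%N by case: (n) hi.
exists (Ordinal hk); rewrite /= divnMDl // divn_small // addn0 modnMDl modn_small //.
by rewrite /zvar hi insubT.
Qed.

Lemma piact_subst (g : 'M[algC]_n) P : piact g P = subst (Hb g) P.
Proof.
rewrite /piact /subst; congr comp_mpoly; apply: eq_from_tnth => k.
rewrite !tnth_mktuple /lin.
have n0 : (0 < n)%N by case: (n) k => [|//] []; rewrite muln0.
have hk : (k %/ n < t)%N by rewrite ltn_divLR.
rewrite -(blocksum n (fun j => zvar algC t n (k %/ n)%N j * (mxnat g j (k %% n)%N)%:MP) hk).
apply: eq_bigr => j _.
rewrite mxE -zvar_ord; case: eqP => [->|_]; last by rewrite mulr0.
by [].
Qed.

End Blk.

Lemma sum_trunc (V : zmodType) n p (F : nat -> V) : (p <= n)%N ->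
  (forall j, (p <= j)%N -> F j = 0) -> \sum_(j < n) F j = \sum_(j < p) F j.
Proof.
move=> pn hF; rewrite (big_ord_widen n F pn) [LHS](bigID (fun j : 'I_n => (j < p)%N)) /=.
rewrite [X in _ + X]big1 ?addr0 // => j; rewrite -leqNgt; exact: hF.
Qed.

Section Tri.
Variables (t n : nat).

Definition upperN (U : 'M[algC]_n) := forall i j : nat, (j < i)%N -> mxnat U i j = 0.
Definition lowerN (L : 'M[algC]_n) := forall i j : nat, (i < j)%N -> mxnat L i j = 0.

Lemma piact_zvar (g : 'M[algC]_n) a b : (a < t)%N -> (b < n)%N ->
  piact g (zvar algC t n a b) = \sum_(j < n) zvar algC t n a j * (mxnat g j b)%:MP.
Proof.
move=> ha hb; have [k [-> [ka kb]]] := zvar_lt ha hb.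
by rewrite /piact comp_mpolyXU nth_mktuple ka kb.
Qed.

Lemma piact_det_upper (U : 'M[algC]_n) p : (p <= t)%N -> (p <= n)%N -> upperN U ->
  piact U (\det (\matrix_(a < p, b < p) zvar algC t n a b)) =
  (\prod_(j < p) mxnat U j j)%:MP * \det (\matrix_(a < p, b < p) zvar algC t n a b).
Proof.
move=> pt pn hU.
rewrite /piact -det_map_mx /=.
set Z := \matrix_(a < p, b < p) zvar algC t n a b.
set Up := \matrix_(a < p, b < p) (mxnat U a b)%:MP : 'M[{mpoly algC[t * n]}]_p.
have -> : map_mx (comp_mpoly [tuple \sum_(j < n) zvar algC t n (k %/ n)%N j *
      (mxnat U j (k %% n)%N)%:MP | k < t * n]) Z = Z *m Up.
  apply/matrixP => a b; rewrite !mxE.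
  have := piact_zvar U (leq_trans (ltn_ord a) pt) (leq_trans (ltn_ord b) pn).
  rewrite /piact => ->.
  rewrite (sum_trunc (F := fun j => zvar algC t n a j * (mxnat U j b)%:MP) pn).
    by apply: eq_bigr => j _; rewrite !mxE.
  move=> j pj; rewrite hU ?mulr0 //.
  exact: (leq_trans (ltn_ord b) pj).
rewrite det_mulmx mulrC; congr (_ * _).
rewrite -det_tr det_trig.
  rewrite rmorph_prod; apply: eq_bigr => j _; by rewrite !mxE.
apply/is_trig_mxP => i j ij; rewrite !mxE hU //.
Qed.

End Tri.

Section Tri2.
Variables (t n : nat).

Lemma piactM (g : 'M[algC]_n) : {morph (@piact algC t n g) : x y / x * y}.
Proof. by move=> x y; rewrite /piact rmorphM. Qed.
Lemma piact1 (g : 'M[algC]_n) : @piact algC t n g 1 = 1.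
Proof. by rewrite /piact rmorph1. Qed.

Lemma piact_eU_upper (U : 'M[algC]_n) lam : size lam = t -> (t <= n)%N -> upperN U ->
  piact U (eU algC t n lam) =
  (\prod_(1 <= l < (ncols lam).+1) \prod_(j < colh lam l) mxnat U j j)%:MP
    * eU algC t n lam.
Proof.
move=> st tn hU; rewrite /eU (big_morph _ (piactM U) (piact1 U)).
rewrite rmorph_prod -big_split /=; apply: eq_bigr => l _.
have ht : (colh lam l <= t)%N by rewrite -st /colh count_size.
by rewrite piact_det_upper // (leq_trans ht tn).
Qed.

Lemma lpminor_LU (L U : 'M[algC]_n) p : (p <= n)%N -> lowerN L -> upperN U ->
  lpminor (L *m U) p = \prod_(j < p) (mxnat L j j * mxnat U j j).
Proof.
move=> pn hL hU; rewrite /lpminor.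
set Lp := \matrix_(i < p, j < p) mxnat L i j.
set Up := \matrix_(i < p, j < p) mxnat U i j.
have -> : \matrix_(i < p, j < p) mxnat (L *m U) i j = Lp *m Up.
  apply/matrixP => i j; rewrite !mxE.
  rewrite mxnat_mul ?(leq_trans (ltn_ord _) pn) //.
  rewrite (sum_trunc (F := fun k => mxnat L i k * mxnat U k j) pn).
    by apply: eq_bigr => k _; rewrite !mxE.
  by move=> k pk; rewrite hL ?mul0r // (leq_trans (ltn_ord i) pk).
rewrite det_mulmx -[\det Up]det_tr !det_trig.
- by rewrite -big_split; apply: eq_bigr => j _; rewrite !mxE.
- by apply/is_trig_mxP => i j ij; rewrite !mxE hU.
- by apply/is_trig_mxP => i j ij; rewrite !mxE hL.
Qed.

Lemma lowerN_trig (L : 'M[algC]_n) : is_trig_mx L -> lowerN L.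
Proof.
move=> /is_trig_mxP hL i j ij.
case: (boolP ((i < n)%N && (j < n)%N)) => [/andP[hi hj]|h].
  by rewrite (mxnat_lt _ hi hj) hL.
rewrite mxnat_out //; move: h; rewrite negb_and; by case/orP=> ->; rewrite ?orbT.
Qed.

Lemma upperN_trig (U : 'M[algC]_n) : is_trig_mx U^T -> upperN U.
Proof.
move=> /is_trig_mxP hU i j ij.
case: (boolP ((i < n)%N && (j < n)%N)) => [/andP[hi hj]|h].
  by rewrite (mxnat_lt _ hi hj) -(hU (Ordinal hj) (Ordinal hi)) ?mxE.
rewrite mxnat_out //; move: h; rewrite negb_and; by case/orP=> ->; rewrite ?orbT.
Qed.

Lemma upperN_ct (L : 'M[algC]_n) : lowerN L -> upperN (ct L).
Proof. by move=> hL i j ij; rewrite mxnat_ct hL ?conjC0. Qed.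

End Tri2.

Definition cdiag n (lam : seq nat) (A : 'M[algC]_n) : algC :=
  \prod_(1 <= l < (ncols lam).+1) \prod_(j < colh lam l) mxnat A j j.

Lemma key t n lam (gv L U : 'M[algC]_n) : size lam = t -> (t <= n)%N ->
  lowerN L -> upperN U -> ct gv *m gv = L *m U ->
  ipZ (piact gv (eU algC t n lam)) (piact gv (eU algC t n lam)) =
  (cdiag lam L * cdiag lam U)^* * ipZ (eU algC t n lam) (eU algC t n lam).
Proof.
move=> st tn hL hU hLU.
set e := eU algC t n lam.
rewrite !piact_subst subst_adj Hb_ct subst_comp Hb_mul hLU -Hb_mul -subst_comp.
rewrite -!piact_subst (piact_eU_upper st tn hU) piactM /piact comp_mpolyC -/(piact L e).
rewrite mul_mpolyC ipZZr -ipZ_conj piact_subst subst_adj Hb_ct -piact_subst.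
rewrite (piact_eU_upper st tn (upperN_ct hL)) mul_mpolyC ipZZr.
have hE : (ipZ e e)^* = ipZ e e by rewrite geC0_conj // ipZ_ge0.
have hc : cdiag lam (ct L) = (cdiag lam L)^*.
  rewrite /cdiag rmorph_prod; apply: eq_bigr => l _.
  by rewrite rmorph_prod; apply: eq_bigr => j _; rewrite mxnat_ct.
rewrite -/(cdiag lam U) -/(cdiag lam (ct L)) hc conjCK rmorphM /= hE.
by rewrite rmorphM /= mulrA (mulrC (cdiag lam U)^*).
Qed.

Theorem mainTheorem2
  (k : fieldExtType rat)                     (* number field *)
  (sigma : {rmorphism k -> algC})            (* archimedean place v *)
  (n : nat) (lam : seq nat)
  (hlam : is_partition lam) (htn : (size lam <= n)%N)
  (g : 'M[k]_n) (hg : g \in unitmx) :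
  let gv := map_mx sigma g in
  let G := gstar sigma gv *m gv in
  @Hv k sigma n lam (piact gv (eU algC (size lam) n lam))
  = powhalf (dv sigma)
      (\prod_(1 <= l < (ncols lam).+1) lpminor G (colh lam l))
    * @Hv k sigma n lam (eU algC (size lam) n lam).
Proof.
move=> gv G.
have hgv : gv \in unitmx by rewrite map_unitmx.
have hgs : gstar sigma gv = ct gv.
  rewrite /gstar; case: excluded_middle_informative => hr.
    by apply/matrixP => i j; rewrite !mxE conj_Creal //; exact: hr.
  by apply/matrixP => i j; rewrite !mxE.
have hct : ct gv = ctv gv by apply/matrixP => i j; rewrite !mxE.
have [L [U [tL tU hLU]]] := LU (PD_gram hgv).
have hLU' : ct gv *m gv = L *m U by rewrite hct.
have hk := key (lam := lam) (erefl (size lam)) htn (lowerN_trig tL) (upperN_trig tU) hLU'.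
have hM : \prod_(1 <= l < (ncols lam).+1) lpminor G (colh lam l) =
    cdiag lam L * cdiag lam U.
  rewrite /G hgs hLU' /cdiag -big_split; apply: eq_bigr => l _.
  rewrite lpminor_LU ?big_split //; last exact: upperN_trig; last exact: lowerN_trig.
  by apply: leq_trans htn; rewrite /colh count_size.
rewrite /Hv hM hk.
set c := _ / _.
set E := ipZ _ _.
set M := cdiag lam L * cdiag lam U.
have hd : (0 < dv sigma)%N by rewrite /dv; case: excluded_middle_informative.
have E0 : 0 <= E by exact: ipZ_ge0.
case: (eqVneq E 0) => [->|En0].
  by rewrite mulr0 /powhalf sqrtC0 expr0n eqn0Ngt hd /= !mulr0.
have Ep : 0 < E by rewrite lt_def En0 E0.
have hX : 0 <= M^* * E by rewrite -hk; exact: ipZ_ge0.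
have Mc0 : 0 <= M^* by rewrite -(pmulr_lge0 _ Ep).
have MM : M^* = M by have := geC0_conj Mc0; rewrite conjCK; move/esym.
rewrite MM in Mc0 *.
rewrite /powhalf sqrtCM ?nnegrE // exprMn.
by rewrite mulrCA.
Qed.
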